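(* Let $\Sigma=\{\sigma_1,\sigma_2,\dots\}$ be an infinite alphabet totally ordered by $\sigma_1<\sigma_2<\cdots$, let $\mathsf A$ be the Manacher array of some string of length $n$, and let $S$ be the lexicographically minimal string over $\Sigma$ whose Manacher array is $\mathsf A$. Then: (1) For every $i\ge3$, the first occurrence of $\sigma_i$ in $S$, at position $m$ say, is preceded by a substring matching the pattern $ZP_{i-2}$ (i.e. some substring $S[t..m-1]$ matches $ZP_{i-2}$). (2) For every $i\ge3$, every later occurrence of $\sigma_i$ in $S$, at position $m$, is either at a palindromically dependent index or is preceded by a substring $S[t..m-1]$ matching $ZP_{i-2}$. (3) The number of distinct symbols occurring in $S$ equals the minimum number of distinct symbols over all strings (over any alphabet) whose Manacher array is $\mathsf A$.
   Context: The Manacher array of $S$ of length $n$: $\mathsf A[2k-1]$ is the largest $r\ge0$ with $1\le k-r$, $k+r\le n$, $S[k-r..k+r]$ a palindrome, and $\mathsf A[2k]$ the largest $r\ge0$ with $1\le k-r+1$, $k+r\le n$, $S[k-r+1..k+r]$ a palindrome. The center of $S[a..b]$ is $(a+b)/2$. An index $m$ of $S$ is palindromically dependent iff there is a palindromic substring $p=S[a..b]$ with center $c_p=(a+b)/2<m\le b$ (so $S[m]$ is forced equal to $S[a+b-m]$); otherwise it is palindromically independent. Palindromic Zimin patterns: a word matches $ZP_1$ if it is a palindrome $P_1$ (possibly empty); a word $W$ matches $ZP_k$ ($k\ge2$) if $W=U P_k U$ where $U$ matches $ZP_{k-1}$ using palindromes $P_1,\dots,P_{k-1}$, and $P_k$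 is a palindrome different from each of $P_1,\dots,P_{k-1}$. *)

(* Defs.v *)
(* Strings are sequences; positions are 1-indexed as in the paper. *)
From mathcomp Require Import all_boot.
Set Implicit Arguments. Unset Strict Implicit. Unset Printing Implicit Defensive.

Section Strings.
Variable T : eqType.

Definition pal (s : seq T) : bool := s == rev s.

(* S[a..b] (1-indexed, inclusive); empty when b < a *)
Definition sub (S : seq T) (a b : nat) : seq T := take (b.+1 - a) (drop a.-1 S).

(* Entry j (1 <= j <= 2n) of the Manacher array of S, n = size S:
   A[2k-1] = largest r with 1 <= k-r, k+r <= n, S[k-r..k+r] palindrome;
   A[2k]   = largest r with 1 <= k-r+1, k+r <= n, S[k-r+1..k+r] palindrome. *)
Definition manacher_entry (S : seq T) (j : nat) : nat :=
  let n := size S in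
  if odd j then
    let k := j.+1./2 in
    \max_(r < n.+1 | [&& r < k, k + r <= n & pal (sub S (k - r) (k + r))]) r
  else
    let k := j./2 in
    \max_(r < n.+1 | [&& r <= k, k + r <= n & pal (sub S (k - r).+1 (k + r))]) r.

Definition manacher (S : seq T) : seq nat :=
  [seq manacher_entry S j | j <- iota 1 (2 * size S)].

(* Word of a palindromic Zimin pattern instance: the list Ps = [:: P_k; ...; P_1]
   gives  Z_1 = P_1,  Z_j = Z_{j-1} ++ P_j ++ Z_{j-1}. *)
Fixpoint zword (Ps : seq (seq T)) : seq T :=
  if Ps is P :: Ps' then zword Ps' ++ P ++ zword Ps' else [::].

(* w matches ZP_k: there are palindromes P_1..P_k, each P_j different from
   P_1..P_{j-1} (i.e. pairwise distinct), producing w. *)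
Definition matchesZP (k : nat) (w : seq T) : Prop :=
  exists Ps : seq (seq T),
    [/\ size Ps = k, all pal Ps, uniq Ps & zword Ps = w].

Definition pal_dependent (S : seq T) (m : nat) : Prop :=
  exists a b, [&& 1 <= a, a <= b, b <= size S, pal (sub S a b),
                  a + b < 2 * m & m <= b].

End Strings.

Fixpoint lex_le (s t : seq nat) : bool :=
  match s, t with
  | [::], _ => true
  | _ :: _, [::] => false
  | x :: s', y :: t' => (x < y) || ((x == y) && lex_le s' t')
  end.

(* Main.v *)
Require Import Defs.
From mathcomp Require Import all_boot zify.
From Stdlib Require Import Classical.
Set Implicit Arguments. Unset Strict Implicit. Unset Printing Implicit Defensive.


Definition palfb {T : eqType} (f : nat -> T) a b :=
  all (fun i => f i == f (a + b - i)) (iota a (b.+1 - a)).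

Definition sf {T : eqType} (x0 : T) (S : seq T) i := nth x0 S i.-1.

Lemma palfbP {T : eqType} (f : nat -> T) a b :
  reflect (forall i, a <= i <= b -> f i = f (a + b - i)) (palfb f a b).
Proof.
apply: (iffP allP) => H i.
- move=> hi; apply/eqP/H; rewrite mem_iota; lia.
- rewrite mem_iota => hi; apply/eqP/H; lia.
Qed.

Lemma palf_in {T : eqType} (f : nat -> T) a b c d :
  palfb f a b -> a <= c -> d <= b -> a + b = c + d -> palfb f c d.
Proof.
move=> /palfbP H h1 h2 h3; apply/palfbP => i hi.
have -> : c + d - i = a + b - i by lia. apply: H; lia.
Qed.

Lemma palfb_triv {T : eqType} (f : nat -> T) a b : b <= a -> palfb f a b.
Proof. move=> h; apply/palfbP => i hi; have -> : a + b - i = i by lia. by []. Qed.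

Lemma palfb_eq {T : eqType} (f g : nat -> T) a b :
  (forall i, a <= i <= b -> f i = g i) -> palfb f a b = palfb g a b.
Proof.
move=> H; apply/palfbP/palfbP => H' i hi.
- rewrite -!H; [exact: H' | lia | lia].
- rewrite !H; [exact: H' | lia | lia].
Qed.

Lemma palfb_ends {T : eqType} (f : nat -> T) a b : palfb f a b -> a <= b -> f a = f b.
Proof. move=> /palfbP H h; rewrite H; [congr f; lia | lia]. Qed.

Lemma palfb_inner {T : eqType} (f : nat -> T) a b : palfb f a b -> palfb f a.+1 b.-1.
Proof.
move=> H; case: (leqP b a) => h; first by apply: palfb_triv; lia.
apply: (palf_in H); lia.
Qed.

Lemma palfb_ext {T : eqType} (f : nat -> T) a b :
  palfb f a.+1 b.-1 -> f a = f b -> palfb f a b.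
Proof.
move=> /palfbP H e; apply/palfbP => i hi.
case: (ltnP a b) => hab; last by have -> : a + b - i = i by lia.
case: (ltngtP i a) => h1; first lia.
- case: (ltngtP i b) => h2; last first.
  + by subst i; have -> : a + b - b = a by lia.
  + lia.
  + rewrite H; [congr f; lia | lia].
- by subst i; have -> : a + b - a = b by lia.
Qed.

Section Gen.
Variables (T : eqType) (x0 : T).

Lemma sub_mapE (S : seq T) a b : 1 <= a -> b <= size S ->
  sub S a b = map (sf x0 S) (iota a (b.+1 - a)).
Proof.
move=> ha hb; apply: (eq_from_nth (x0:=x0)).
  rewrite size_map size_iota size_take size_drop; case: ltnP => h //; lia.
move=> i; rewrite size_take size_drop => hi.
have hi' : i < b.+1 - a. move: hi; case: (ltnP (b.+1 - a) (size S - a.-1)) => h; lia.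
rewrite (nth_map 0) ?size_iota // nth_iota // nth_take // nth_drop /sf.
congr nth; lia.
Qed.

Lemma palE (S : seq T) a b : 1 <= a -> b <= size S ->
  pal (sub S a b) = palfb (sf x0 S) a b.
Proof.
move=> ha hb; rewrite /pal sub_mapE //; set n := b.+1 - a.
apply/eqP/palfbP.
- move=> H i hi; have := congr1 (nth x0 ^~ (i - a)) H.
  rewrite nth_rev ?size_map ?size_iota; last lia.
  rewrite !(nth_map 0) ?size_iota; try lia.
  rewrite !nth_iota; try lia.
  have -> : a + (i - a) = i by lia.
  by have -> : a + (n - (i - a).+1) = a + b - i by lia.
- move=> H; apply: (eq_from_nth (x0:=x0)); first by rewrite size_rev.
  move=> i; rewrite size_map size_iota => hi.
  rewrite nth_rev ?size_map ?size_iota //.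
  rewrite !(nth_map 0) ?size_iota; try lia.
  rewrite !nth_iota; try lia.
  rewrite H; [congr (sf x0 S); lia | lia].
Qed.

End Gen.


Definition agree {T1 T2 : eqType} (f : nat -> T1) (g : nat -> T2) n :=
  forall a b, 1 <= a -> b <= n -> palfb f a b = palfb g a b.

Lemma manacher_agree (T1 T2 : eqType) (x1 : T1) (x2 : T2) (S1 : seq T1) (S2 : seq T2) :
  size S1 = size S2 -> agree (sf x1 S1) (sf x2 S2) (size S1) -> manacher S1 = manacher S2.
Proof.
rewrite /manacher => hs H; rewrite hs; apply: eq_map => j.
rewrite /manacher_entry hs; case: (odd j).
- apply: eq_bigl => r /=.
  case h1: (r < _) => //=; case h2: (_ + r <= _) => //=.
  rewrite (palE x1) ?(palE x2); try lia. apply: H; lia.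
- apply: eq_bigl => r /=.
  case h1: (r <= _) => //=; case h2: (_ + r <= _) => //=.
  rewrite (palE x1) ?(palE x2); try lia. apply: H; lia.
Qed.

Section Ent.
Variables (T : eqType) (x0 : T).

Lemma entry_odd (S : seq T) k r : r <= k -> k.+1 + r <= size S ->
  pal (sub S (k.+1 - r) (k.+1 + r)) = (r <= manacher_entry S k.*2.+1).
Proof.
move=> h1 h2; rewrite /manacher_entry.
have -> : odd k.*2.+1 = true by lia.
have -> : (k.*2.+2)./2 = k.+1 by lia.
apply/idP/idP.
- move=> hp; have hr : r < (size S).+1 by lia.
  apply: (leq_bigmax_cond (Ordinal hr)) => /=. rewrite hp andbT; apply/andP; split; lia.
- move=> hle; apply/negPn/negP => hnp.
  have r0 : 0 < r.
    case: (posnP r) => // e; subst r; move: hnp.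
    rewrite (palE x0); try lia. by rewrite palfb_triv //; lia.
  have : \max_(i < (size S).+1 | [&& i < k.+1, k.+1 + i <= size S
             & pal (sub S (k.+1 - i) (k.+1 + i))]) i <= r.-1.
    apply/bigmax_leqP => i /and3P [i1 i2 i3].
    case: (ltnP i r) => hi; first lia.
    move: i3; rewrite (palE x0); try lia. move=> i3.
    case/negP: hnp; rewrite (palE x0); try lia.
    apply: (palf_in i3); lia.
  lia.
Qed.

Lemma entry_even (S : seq T) k r : r <= k -> k + r <= size S ->
  pal (sub S (k - r).+1 (k + r)) = (r <= manacher_entry S k.*2).
Proof.
move=> h1 h2; rewrite /manacher_entry.
have -> : odd k.*2 = false by lia.
have -> : (k.*2)./2 = k by lia.
apply/idP/idP.
- move=> hp; have hr : r < (size S).+1 by lia.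
  apply: (leq_bigmax_cond (Ordinal hr)) => /=. rewrite hp andbT; apply/andP; split; lia.
- move=> hle; apply/negPn/negP => hnp.
  have r0 : 0 < r.
    case: (posnP r) => // e; subst r; move: hnp.
    rewrite (palE x0); try lia. by rewrite palfb_triv //; lia.
  have : \max_(i < (size S).+1 | [&& i <= k, k + i <= size S
             & pal (sub S (k - i).+1 (k + i))]) i <= r.-1.
    apply/bigmax_leqP => i /and3P [i1 i2 i3].
    case: (ltnP i r) => hi; first lia.
    move: i3; rewrite (palE x0); try lia. move=> i3.
    case/negP: hnp; rewrite (palE x0); try lia.
    apply: (palf_in i3); lia.
  lia.
Qed.

Lemma nth_manacher (S : seq T) j : 1 <= j <= 2 * size S ->
  nth 0 (manacher S) j.-1 = manacher_entry S j.
Proof.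
move=> hj; rewrite /manacher (nth_map 0) ?size_iota; last lia.
rewrite nth_iota; last lia. congr manacher_entry; lia.
Qed.

End Ent.

Lemma agree_manacher (T1 T2 : eqType) (x1 : T1) (x2 : T2) (S1 : seq T1) (S2 : seq T2) :
  manacher S1 = manacher S2 -> size S1 = size S2 /\ agree (sf x1 S1) (sf x2 S2) (size S1).
Proof.
move=> H.
have hs : size S1 = size S2.
  have := congr1 size H; rewrite /manacher !size_map !size_iota; lia.
split => // a b ha hb.
case: (ltnP b a) => hab; first by rewrite !palfb_triv //; lia.
rewrite -(palE x1) ?(palE x2) -?(palE x2); try lia.
set r := (b - a)./2.
case: (boolP (odd (b - a))) => od.
- set k := a + r.
  have E1 : (k - r.+1).+1 = a by lia.
  have E2 : k + r.+1 = b by lia.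
  rewrite -E1 -E2 (entry_even x1) ?(entry_even x2); try lia.
  rewrite -(@nth_manacher _ S1) ?H ?(@nth_manacher _ S2) //; lia.
- set k := (a + r).-1.
  have E1 : k.+1 - r = a by lia.
  have E2 : k.+1 + r = b by lia.
  rewrite -E1 -E2 (entry_odd x1) ?(entry_odd x2); try lia.
  rewrite -(@nth_manacher _ S1) ?H ?(@nth_manacher _ S2) //; lia.
Qed.


Lemma mirror_pal {T : eqType} (f : nat -> T) c e a b :
  palfb f c e -> c <= a -> a <= b -> b <= e ->
  palfb f a b -> palfb f (c + e - b) (c + e - a).
Proof.
move=> /palfbP H1 h1 h2 h3 /palfbP H2; apply/palfbP => i hi.
rewrite H1; last lia. rewrite H2; last lia. rewrite H1; last lia.
congr f; lia.
Qed.

Lemma mirror_palE {T : eqType} (f : nat -> T) c e a b :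
  palfb f c e -> c <= a -> a <= b -> b <= e ->
  palfb f a b = palfb f (c + e - b) (c + e - a).
Proof.
move=> H h1 h2 h3; apply/idP/idP => H'; first exact: mirror_pal.
have := mirror_pal H _ _ _ H'.
have -> : c + e - (c + e - a) = a by lia.
have -> : c + e - (c + e - b) = b by lia.
apply; lia.
Qed.

Lemma mirror_pre {T : eqType} (f : nat -> T) a b c :
  palfb f a b -> palfb f c b -> a <= c -> c <= b -> palfb f a (a + b - c).
Proof.
move=> /palfbP H1 /palfbP H2 h1 h2; apply/palfbP => i hi.
rewrite H1; last lia. rewrite H2; last lia. rewrite H1; last lia.
congr f; lia.
Qed.

Notation s_ := (sf 0).

Lemma sf_rcons_lt (u : seq nat) z i : 1 <= i <= size u -> s_ (rcons u z) i = s_ u i.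
Proof. move=> h; rewrite /sf nth_rcons; have -> : i.-1 < size u by lia. by []. Qed.

Lemma sf_rcons_last (u : seq nat) z : s_ (rcons u z) (size u).+1 = z.
Proof. by rewrite /sf nth_rcons /= ltnn eqxx. Qed.

Lemma sf_take (S : seq nat) k i : 1 <= i <= k -> s_ (take k S) i = s_ S i.
Proof. move=> h; rewrite /sf nth_take //; lia. Qed.

Lemma agree_pt {T1 T2 : eqType} (f : nat -> T1) (h : nat -> T1) (g : nat -> T2) m :
  agree f g m -> (forall i, 1 <= i <= m -> f i = h i) -> agree h g m.
Proof.
move=> H E a b ha hb; rewrite -H //; apply: palfb_eq => i hi; symmetry; apply: E; lia.
Qed.

Lemma agree_sym {T1 T2 : eqType} (f : nat -> T1) (g : nat -> T2) m :
  agree f g m -> agree g f m.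
Proof. by move=> H a b ha hb; rewrite H. Qed.

Lemma ext_indep (u S : seq nat) z :
  agree (s_ u) (s_ S) (size u) ->
  (forall a, 1 <= a <= size u -> ~~ palfb (s_ S) a (size u).+1) ->
  (forall a, 1 <= a <= size u -> palfb (s_ S) a.+1 (size u) -> z != s_ u a) ->
  agree (s_ (rcons u z)) (s_ S) (size u).+1.
Proof.
set m := size u => Hag Hind Hz a b ha hb.
case: (ltnP b m.+1) => hb'.
  rewrite -Hag; [|lia|lia]. apply: palfb_eq => i hi; apply: sf_rcons_lt; lia.
have -> : b = m.+1 by lia.
case: (ltnP m a) => ham; first by rewrite !palfb_triv //; lia.
rewrite (negbTE (Hind a _)); last lia.
apply/negP => hp.
have e := palfb_ends hp (ltnW (leq_ltn_trans ham (ltnSn m))).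
rewrite sf_rcons_lt in e; last lia. rewrite sf_rcons_last in e.
have inn := palfb_inner hp; rewrite /= in inn.
have : palfb (s_ u) a.+1 m.
  rewrite -(palfb_eq (f := s_ (rcons u z))) // => i hi; apply: sf_rcons_lt; lia.
rewrite Hag; [|lia|lia] => hS.
have ham' : 1 <= a <= m by lia.
by move: (Hz a ham' hS); rewrite e eqxx.
Qed.

Lemma ext_dep (u S : seq nat) c :
  agree (s_ u) (s_ S) (size u) ->
  1 <= c <= size u -> palfb (s_ S) c (size u).+1 ->
  (forall a, 1 <= a < c -> ~~ palfb (s_ S) a (size u).+1) ->
  agree (s_ (rcons u (s_ u c))) (s_ S) (size u).+1.
Proof.
set m := size u; set g := s_ (rcons u (s_ u c)) => Hag hc Hc Hmin.
have gu : forall i, 1 <= i <= m -> g i = s_ u i by move=> i hi; apply: sf_rcons_lt.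
have toS : forall a b, 1 <= a -> b <= m -> palfb g a b = palfb (s_ S) a b.
  move=> a b ha hb; rewrite -Hag //; apply: palfb_eq => i hi; apply: gu; lia.
move=> a b ha hb.
case: (ltnP b m.+1) => hb'; first by apply: toS; lia.
have -> : b = m.+1 by lia.
case: (ltnP m a) => ham; first by rewrite !palfb_triv //; lia.
have Pg : palfb g c m.+1.
  apply: palfb_ext; last by rewrite gu; [rewrite /g sf_rcons_last | lia].
  rewrite /= toS; [|lia|lia]. exact: (palfb_inner Hc).
case: (ltnP a c) => hac.
- have hac' : 1 <= a < c by lia.
  rewrite (negbTE (Hmin a hac')).
  apply/negP => hp.
  have P1 := mirror_pre hp Pg (ltnW hac) (ltnW (leq_ltn_trans (proj2 (andP hc)) (ltnSn m))).
  rewrite toS in P1; [|lia|lia].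
  have P2 := palfb_inner hp; rewrite /= toS in P2; [|lia|lia].
  case/negP: (Hmin a hac').
  apply: palfb_ext => //.
  rewrite (palfb_ends P1); last lia.
  rewrite -(palfb_ends Hc); last lia.
  move/palfbP: P2 => P2; rewrite P2; last lia. congr (s_ S); lia.
- case: (ltngtP a c) => hac2; first lia.
  + rewrite (@mirror_palE _ g c m.+1 a m.+1 Pg); try lia.
    rewrite (@mirror_palE _ (s_ S) c m.+1 a m.+1 Hc); try lia.
    apply: toS; lia.
  + by subst a; rewrite Pg Hc.
Qed.

Lemma mem_sumn (u : seq nat) x : x \in u -> x <= sumn u.
Proof.
elim: u => //= y u IH; rewrite inE => /orP [/eqP -> | h]; first lia.
have := IH h; lia.
Qed.

Lemma ext_exists (u S : seq nat) :
  agree (s_ u) (s_ S) (size u) -> exists z, agree (s_ (rcons u z)) (s_ S) (size u).+1.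
Proof.
move=> Hag.
case: (boolP (has (fun c => palfb (s_ S) c (size u).+1) (iota 1 (size u)))) => H.
- have ex : exists c, (1 <= c <= size u) && palfb (s_ S) c (size u).+1.
    case/hasP: H => c; rewrite mem_iota => hc Pc; exists c; rewrite Pc andbT; lia.
  case: (ex_minnP ex) => c /andP [hc Pc] hmin.
  exists (s_ u c); apply: ext_dep => // a ha; apply/negP => Pa.
  have : c <= a by apply: hmin; rewrite Pa andbT; lia.
  lia.
- exists (sumn u).+1; apply: ext_indep => //.
  + move=> a ha; move/hasPn: H; apply; rewrite mem_iota; lia.
  + move=> a ha _; apply/eqP => e.
    have h1 : a.-1 < size u by lia.
    have : s_ u a \in u by exact: (mem_nth 0 h1).
    move/mem_sumn; rewrite -e; lia.
Qed.

Lemma extend (S : seq nat) k : forall u : seq nat, size u + k = size S ->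
  agree (s_ u) (s_ S) (size u) ->
  exists S', [/\ size S' = size S, agree (s_ S') (s_ S) (size S) & take (size u) S' = u].
Proof.
elim: k => [|k IH] u hs Hag.
  rewrite addn0 in hs; exists u; split => //; [by rewrite -hs | by rewrite take_size].
case: (ext_exists Hag) => z Hz.
have hs' : size (rcons u z) + k = size S by rewrite size_rcons; lia.
have Hz' : agree (s_ (rcons u z)) (s_ S) (size (rcons u z)) by rewrite size_rcons.
case: (IH _ hs' Hz') => S' [h1 h2 h3]; exists S'; split => //.
rewrite -(@take_takel _ (size u) (size (rcons u z))); last by rewrite size_rcons.
rewrite h3.
by rewrite -cats1 take_size_cat.
Qed.

Lemma lex_false (p s t : seq nat) x y : y < x -> lex_le (p ++ x :: s) (p ++ y :: t) = false.
Proof.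
move=> h; elim: p => [|c p IH] /=.
  rewrite ltnNge (ltnW h) /=; case: eqP => //= e; lia.
by rewrite ltnn eqxx.
Qed.

Lemma greedy (S : seq nat) :
  (forall S' : seq nat, manacher S' = manacher S -> lex_le S S') ->
  forall k, k < size S -> (forall a, 1 <= a <= k -> ~~ palfb (s_ S) a k.+1) ->
  forall y, y < s_ S k.+1 -> exists a, [/\ 1 <= a <= k, palfb (s_ S) a.+1 k & s_ S a = y].
Proof.
move=> Hmin k hk Hind y hy.
case: (boolP (has (fun a => palfb (s_ S) a.+1 k && (s_ S a == y)) (iota 1 k))) => H.
  case/hasP: H => a; rewrite mem_iota => ha /andP [P1 /eqP P2]; exists a; split => //; lia.
exfalso.
set u0 := take k S.
have hu0 : size u0 = k by rewrite size_takel //; lia.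
have Ag0 : agree (s_ u0) (s_ S) (size u0).
  move=> a b ha hb; apply: palfb_eq => i hi; apply: sf_take; lia.
have Ag1 : agree (s_ (rcons u0 y)) (s_ S) (size u0).+1.
  apply: ext_indep => //; rewrite hu0 //.
  move=> a ha Pa; apply/eqP => e.
  have hm : a \in iota 1 k by rewrite mem_iota; lia.
  have := hasPn H a hm; rewrite Pa /= e sf_take; last lia.
  by rewrite eqxx.
have hs1 : size (rcons u0 y) + (size S - k.+1) = size S by rewrite size_rcons hu0; lia.
have Ag1' : agree (s_ (rcons u0 y)) (s_ S) (size (rcons u0 y)) by rewrite size_rcons.
case: (extend hs1 Ag1') => S' [h1 h2 h3].
have hm : manacher S' = manacher S by apply: (manacher_agree (x1:=0) (x2:=0)); rewrite h1.
have := Hmin _ hm.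
have -> : S = u0 ++ s_ S k.+1 :: drop k.+1 S by rewrite /u0 /sf /= -drop_nth ?cat_take_drop.
have -> : S' = u0 ++ y :: drop k.+1 S'.
  rewrite -{1}(cat_take_drop k.+1 S'); rewrite size_rcons hu0 in h3.
  by rewrite h3 -cats1 -catA.
by rewrite lex_false.
Qed.


Ltac clear_fa := repeat match goal with
 | H : forall _, _ |- _ => clear H
 | H : exists _, _ |- _ => clear H
 | H : _ = _ :> seq _ |- _ => clear H
 end.
Ltac clear_nonarith := repeat match goal with
 | H : ?T |- _ => lazymatch T with
     | is_true (leq _ _) => fail
     | is_true (andb (leq _ _) (leq _ _)) => fail
     | @eq nat _ _ => fail
     | _ => clear H
   end
 end.
Ltac slia := clear_nonarith; lia.

Lemma map_iota_eq (f : nat -> nat) a b n :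
  (forall k, k < n -> f (a + k) = f (b + k)) -> map f (iota a n) = map f (iota b n).
Proof.
elim: n a b => //= n IH a b H; congr cons.
  by have := H 0 (ltn0Sn _); rewrite !addn0.
apply: IH => k hk; have := H k.+1 hk; by rewrite !addnS -!addSn.
Qed.

Lemma last_map_iota (f : nat -> nat) x c n : last x (map f (iota c n.+1)) = f (c + n).
Proof.
rewrite -nth_last size_map size_iota (nth_map 0) ?size_iota // nth_iota //.
Qed.

Lemma argmin (V : seq nat) (f : nat -> nat) : V != [::] ->
  exists y, y \in V /\ forall z, z \in V -> f y <= f z.
Proof.
elim: V => // x V IH _.
case: (altP (V =P [::])) => [-> | hV].
  by exists x; split; [rewrite inE eqxx | move=> z; rewrite inE => /eqP ->].
case: (IH hV) => y [hy hm].
case: (leqP (f x) (f y)) => h.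
- exists x; split; first by rewrite inE eqxx.
  move=> z; rewrite inE => /orP [/eqP -> // | hz]; exact: leq_trans h (hm z hz).
- exists y; split; first by rewrite inE hy orbT.
  move=> z; rewrite inE => /orP [/eqP -> | hz]; [lia | exact: hm].
Qed.

Section Z.
Variables (S : seq nat) (e : nat) (A : nat -> nat).
Hypothesis he : e <= size S.
Notation s := (s_ S).

Lemma subS a b : 1 <= a -> b <= e -> sub S a b = map s (iota a (b.+1 - a)).
Proof. move=> h1 h2; apply: sub_mapE => //; exact: leq_trans h2 he. Qed.

Lemma palS a b : 1 <= a -> b <= e -> pal (sub S a b) = palfb s a b.
Proof. move=> h1 h2; apply: palE => //; exact: leq_trans h2 he. Qed.

Definition good y := [/\ 1 <= A y <= e, palfb s (A y).+1 e, s (A y) = y &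
  forall a, 1 <= a <= e -> palfb s a.+1 e -> s a = y -> a <= A y].

Definition zinv top (V : seq nat) (Ps : seq (seq nat)) :=
  forall P, P \in Ps -> P != [::] ->
   (last 0 P = s e /\ s e \notin V) \/ (last 0 P \in V /\ A top < A (last 0 P)).

Lemma transl b a : palfb s b.+1 e -> palfb s a.+1 e -> b <= a ->
  forall j, b.+1 <= j -> j + (a - b) <= e -> s j = s (j + (a - b)).
Proof.
move=> /palfbP Pb /palfbP Pa hab j h1 h2.
rewrite Pb; last lia. rewrite Pa; last lia. congr s; lia.
Qed.

Lemma doubling y1 y2 : good y1 -> good y2 -> A y1 < A y2 -> A y1 + e < (A y2).*2.
Proof.
case=> h1 P1 s1 M1 [h2 P2 s2 M2] lt.
rewrite ltnNge; apply/negP => hle.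
set a := A y1; set a' := A y2.
have T := transl P1 P2 (ltnW lt).
have : 2 * a' - a <= a'.
  apply: M2; first lia.
  - apply/palfbP => i hi.
    move/palfbP: P2 => P2'. rewrite P2'; last lia.
    rewrite T; try lia. congr s; lia.
  - rewrite -s2 -/a' (T a'); try lia. congr s; lia.
lia.
Qed.

Lemma mid_facts a a' : 1 <= a -> a < a' -> a' <= e -> a + e < a'.*2 ->
  palfb s a.+1 e -> palfb s a'.+1 e ->
  [/\ pal (sub S (a + e - a').+1 a'), last 0 (sub S (a + e - a').+1 a') = s a',
      sub S (a + e - a').+1 a' != [::] &
      sub S a'.+1 e ++ sub S (a + e - a').+1 a' ++ sub S a'.+1 e = sub S a.+1 e].
Proof.
move=> h1 h2 h3 h4 P1 P2.
have PE : sub S (a + e - a').+1 a' = map s (iota (a + e - a').+1 ((a' - (a + e - a')).-1.+1)).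
  rewrite subS; [|lia|lia]. congr (map s (iota _ _)); lia.
split.
- rewrite palS; [|lia|lia]. apply: (palf_in P1); lia.
- rewrite PE last_map_iota; congr s; lia.
- by rewrite PE.
- rewrite !subS; [|lia|lia|lia|lia|lia|lia].
  have -> : e.+1 - a.+1 = (e.+1 - a'.+1) + ((a'.+1 - (a + e - a').+1) + (e.+1 - a'.+1)) by lia.
  rewrite !iotaD !map_cat; congr (_ ++ (_ ++ _)).
  + apply: map_iota_eq => k hk.
    move/palfbP: P1 => P1'; move/palfbP: P2 => P2'.
    rewrite (P1' (a.+1 + k)); last lia. rewrite (P2' (a'.+1 + k)); last lia. congr s; lia.
  + congr (map s (iota _ _)); lia.
  + congr (map s (iota _ _)); lia.
Qed.

Lemma zimin n : forall V : seq nat, size V = n.+1 -> uniq V ->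
  (forall y, y \in V -> good y) ->
  exists top (Ps : seq (seq nat)), [/\ top \in V, (forall y, y \in V -> A top <= A y),
     size Ps = size V, all (@pal _) Ps &
     [/\ uniq Ps, zword Ps = sub S (A top).+1 e & zinv top V Ps]].
Proof.
elim: n => [|n IH] V hs hu hg.
- case: V hs hu hg => [|y [|//]] //= _ _ hg.
  have [h1 P1 s1 M1] := hg y (mem_head _ _).
  exists y, [:: sub S (A y).+1 e]; split => //.
  + exact: mem_head.
  + by move=> z; rewrite inE => /eqP ->.
  + by rewrite /= palS //; lia.
  + split => //=; first by rewrite cats0.
    move=> P; rewrite inE => /eqP -> hne; left.
    rewrite subS; [|lia|lia].
    have hn : e.+1 - (A y).+1 = (e - (A y)).-1.+1.
      move: hne; rewrite subS; try lia.
      case E: (e.+1 - (A y).+1) => //=; lia.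
    rewrite hn last_map_iota; split; first by congr s; lia.
    rewrite inE; apply/negP => /eqP E.
    have : e <= A y by apply: M1 => //; [lia | apply: palfb_triv].
    move: hne; rewrite subS; try lia.
have hV : V != [::] by case: V hs hu hg.
case: (argmin A hV) => ys [hys hmin].
set V' := rem ys V.
have memV' : forall z, (z \in V') = (z != ys) && (z \in V).
  by move=> z; rewrite /V' (mem_rem_uniq ys hu) inE.
have hs' : size V' = n.+1 by rewrite size_rem // hs.
have hu' : uniq V' := rem_uniq ys hu.
have hg' : forall y, y \in V' -> good y.
  by move=> y; rewrite memV' => /andP [_ h]; apply: hg.
case: (IH V' hs' hu' hg') => y' [Ps' [hy' hmin' hsz' hpal' [huq' hz' hinv']]].
have /andP [yne hy'V] : (y' != ys) && (y' \in V) by rewrite -memV'.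
have gs := hg ys hys; have gy := hg y' hy'V.
have lt : A ys < A y'.
  have := hmin y' hy'V; rewrite leq_eqVlt => /orP [/eqP E | //].
  case: gs gy => _ _ s1 _ [_ _ s2 _]. by move: yne; rewrite -s1 -s2 E eqxx.
have db := doubling gs gy lt.
case: gs => [h1 P1 s1 M1]; case: gy => [h2 P2 s2 M2].
clear IH hg hg'.
move Ea: (A ys) hmin lt db h1 P1 s1 M1 => a hmin lt db h1 P1 s1 M1.
move Ea': (A y') hz' hmin' lt db h2 P2 s2 M2 hinv' => a' hz' hmin' lt db h2 P2 s2 M2 hinv'.
have [h1a h1b] : 1 <= a /\ a <= e by move: h1 => /andP [].
have [h2a h2b] : 1 <= a' /\ a' <= e by move: h2 => /andP [].
have [Ppal Plast Pne Psplit] := mid_facts h1a lt h2b db P1 P2.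
move: (sub S (a + e - a').+1 a') Ppal Plast Pne Psplit => P Ppal Plast Pne Psplit.
have lastP : last 0 P = y' by rewrite Plast s2.
exists ys, (P :: Ps'); split => //.
- by rewrite Ea.
- by rewrite /= hsz' hs' hs.
- by rewrite /= hpal' Ppal.
- split.
  + rewrite /= huq' andbT; apply/negP => hP.
    case: (hinv' P hP Pne) => [[hl hn] | [hl hlt]].
    * by move: hn; rewrite -hl lastP hy'.
    * by move: hlt; rewrite lastP Ea' ltnn.
  + by rewrite /= hz' Ea.
  + move=> Q; rewrite inE => /orP [/eqP -> | hQ] hne.
      by right; rewrite lastP hy'V Ea Ea'.
    rewrite Ea; case: (hinv' Q hQ hne) => [[hl hn] | [hl hlt]].
    * left; split => //; apply/negP => hse.
      have : s e == ys by move: hn; rewrite memV' hse andbT negbK.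
      move/eqP => hse'.
      have : e <= a by apply: M1 => //; [slia | apply: palfb_triv].
      slia.
    * right; split; last slia.
      by move: hl; rewrite memV' => /andP [].
Qed.
End Z.


Lemma bigmax_attain (r : seq nat) (P : pred nat) :
  has P r -> ((\max_(i <- r | P i) i) \in r) && P (\max_(i <- r | P i) i).
Proof.
elim: r => //= x r IH; rewrite big_cons.
case Px: (P x) => /= hr.
- case: (boolP (has P r)) => hr'.
  + case/andP: (IH hr') => h1 h2.
    case: (leqP x (\max_(j <- r | P j) j)) => hle.
    * by rewrite inE h1 orbT h2.
    * by rewrite inE eqxx Px.
  + have -> : \max_(j <- r | P j) j = 0.
      rewrite big_seq_cond big1 // => i /andP [hi Pi].
      by move/hasPn: hr' => /(_ i hi); rewrite Pi.
    by rewrite maxn0 inE eqxx Px.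
- case/andP: (IH hr) => h1 h2; by rewrite inE h1 orbT h2.
Qed.

Lemma eq_pattern {T : eqType} (f : nat -> T) p q e :
  p < q -> q <= e -> palfb f p.+1 e -> palfb f q.+1 e ->
  palfb f p (p.+1 + e - q) = (f p == f q).
Proof.
move=> h1 h2 /palfbP P1 /palfbP P2; apply/idP/eqP.
- move=> /palfbP H. rewrite H; last lia. rewrite P1; last lia. congr f; lia.
- move=> E; apply/palfbP => i hi.
  case: (ltngtP i p) => hp; first lia.
  + case: (ltngtP i (p.+1 + e - q)) => hq; last first.
    * subst i; rewrite P1; last lia.
      have -> : p + (p.+1 + e - q) - (p.+1 + e - q) = p by lia.
      rewrite E; congr f; lia.
    * lia.
    * rewrite P1; last lia. rewrite P2; last lia. rewrite P1; last lia. congr f; lia.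
  + subst i. have -> : p + (p.+1 + e - q) - p = p.+1 + e - q by lia.
    rewrite E P1; last lia. congr f; lia.
Qed.

Lemma dep_earlier (S : seq nat) m : pal_dependent S m ->
  exists m', 1 <= m' < m /\ s_ S m' = s_ S m.
Proof.
case=> a [b /andP [h1 /andP [h2 /andP [h3 /andP [h4 /andP [h5 h6]]]]]].
rewrite (palE 0) // in h4.
exists (a + b - m); split; first lia.
by move/palfbP: h4 => P; rewrite (P m) //; lia.
Qed.

Lemma indep_of (S : seq nat) m : ~ pal_dependent S m -> m <= size S ->
  forall a, 1 <= a < m -> ~~ palfb (s_ S) a m.
Proof.
move=> H hm a ha; apply/negP => P; apply: H; exists a, m.
repeat (apply/andP; split); try lia; try exact hm.
rewrite (palE 0) //; lia.
Qed.

Definition Af (S : seq nat) e y :=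
  \max_(a <- iota 1 e | palfb (s_ S) a.+1 e && (s_ S a == y)) a.

Lemma Af_good (S : seq nat) e y :
  (exists a, [/\ 1 <= a <= e, palfb (s_ S) a.+1 e & s_ S a = y]) -> good S e (Af S e) y.
Proof.
case=> a [ha Pa sa].
have hh : has (fun a => palfb (s_ S) a.+1 e && (s_ S a == y)) (iota 1 e).
  apply/hasP; exists a; first by rewrite mem_iota; lia.
  by rewrite Pa sa eqxx.
case/andP: (bigmax_attain hh); rewrite -/(Af S e y) mem_iota => h1 /andP [h2 /eqP h3].
split => //; try lia.
move=> a' ha' Pa' sa'.
apply: (leq_bigmax_seq a'); first by rewrite mem_iota; lia.
by rewrite /= Pa' sa' eqxx.
Qed.

Lemma core (S : seq nat) :
  (forall S' : seq nat, manacher S' = manacher S -> lex_le S S') ->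
  forall m, 1 <= m <= size S -> ~ pal_dependent S m -> 2 <= s_ S m ->
  exists t, 1 <= t <= m /\ matchesZP (s_ S m - 1) (sub S t m.-1).
Proof.
move=> Hmin m hm Hd h2.
have [e Em] : exists e, m = e.+1 by exists m.-1; lia.
subst m; rewrite /=.
have He : e <= size S by lia.
have Hind : forall a, 1 <= a <= e -> ~~ palfb (s_ S) a e.+1.
  move=> a ha; apply: (indep_of Hd) => //; lia.
have hV : size (iota 0 (s_ S e.+1 - 1)) = (s_ S e.+1 - 2).+1 by rewrite size_iota; lia.
have hg : forall y, y \in iota 0 (s_ S e.+1 - 1) -> good S e (Af S e) y.
  move=> y; rewrite mem_iota => hy; apply: Af_good.
  apply: (greedy Hmin) => //; lia.
case: (zimin He hV (iota_uniq _ _) hg) => top [Ps [htop _ hsz hpal [huq hz _]]].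
have [ht _ _ _] := hg top htop.
exists (Af S e top).+1; split; first lia.
exists Ps; split => //; by rewrite hsz size_iota.
Qed.

Lemma part3 (S : seq nat) :
  (forall S' : seq nat, manacher S' = manacher S -> lex_le S S') ->
  forall (T : eqType) (w : seq T), manacher w = manacher S ->
  size (undup S) <= size (undup w).
Proof.
move=> Hmin T w hw.
case: (altP (S =P [::])) => [-> // | hne].
set M := \max_(x <- S) x.
have hMS : M \in S.
  have hh : has xpredT S by rewrite has_predT lt0n size_eq0.
  by case/andP: (bigmax_attain hh).
have hleM : forall x, x \in S -> x <= M.
  by move=> x hx; apply: (leq_bigmax_seq x hx).
have hsz0 : size w = size S.
  have := congr1 size hw; rewrite /manacher !size_map !size_iota => h.
  by apply/eqP; rewrite -(@eqn_pmul2l 2) //; apply/eqP.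
case Ew: w hw hsz0 => [|x0 w'] hw hsz0.
  by move: hsz0 hne; rewrite /= => /esym /size0nil ->.
rewrite -Ew in hw hsz0 *.
have [_ Hag] := agree_manacher x0 0 hw.
set e := index M S.
have he : e < size S by rewrite index_mem.
have sm : s_ S e.+1 = M by rewrite /sf /= nth_index.
have Hd : ~ pal_dependent S e.+1.
  move=> Hd; case: (dep_earlier Hd) => m' [hm' E].
  have := @before_find _ 0 (pred1 M) S m'.-1.
  rewrite -/(index M S) -/e /= => /(_ ltac:(lia)).
  by move: E; rewrite sm /sf => ->; rewrite eqxx.
have Hind : forall a, 1 <= a <= e -> ~~ palfb (s_ S) a e.+1.
  move=> a ha; apply: (indep_of Hd) => //; lia.
have hg : forall y, y < M -> good S e (Af S e) y.
  move=> y hy; apply: Af_good; apply: (greedy Hmin) => //; lia.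
set wf := sf x0 w.
have Agw : forall a b, 1 <= a -> b <= size S -> palfb wf a b = palfb (s_ S) a b.
  by move=> a b ha hb; apply: Hag => //; rewrite hsz0.
set L := wf e.+1 :: map (fun y => wf (Af S e y)) (iota 0 M).
have Luniq : uniq L.
  rewrite /L /=; apply/andP; split.
  - apply/mapP => [[y hy E]]; move: hy; rewrite mem_iota => hy.
    have [h1 P1 s1 M1] := hg y ltac:(lia).
    have := Hind (Af S e y) h1; rewrite -Agw; [|lia|lia].
    move/negP; apply; apply: palfb_ext => //=.
    by rewrite Agw; [|lia|lia].
  - rewrite map_inj_in_uniq ?iota_uniq // => y z; rewrite !mem_iota => hy hz E.
    have [h1 P1 s1 M1] := hg y ltac:(lia).
    have [h1' P1' s1' M1'] := hg z ltac:(lia).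
    case: (ltngtP (Af S e y) (Af S e z)) => hyz.
    + have hq : Af S e z <= e by lia.
      have E1 := eq_pattern hyz hq P1 P1'.
      have W1 : palfb wf (Af S e y).+1 e by rewrite Agw; [|lia|lia].
      have W2 : palfb wf (Af S e z).+1 e by rewrite Agw; [|lia|lia].
      have E2 := eq_pattern hyz hq W1 W2.
      apply/eqP; rewrite -s1 -s1' -E1 -Agw; [|lia|lia].
      by rewrite E2 E eqxx.
    + have hq : Af S e y <= e by lia.
      have E1 := eq_pattern hyz hq P1' P1.
      have W1 : palfb wf (Af S e z).+1 e by rewrite Agw; [|lia|lia].
      have W2 : palfb wf (Af S e y).+1 e by rewrite Agw; [|lia|lia].
      have E2 := eq_pattern hyz hq W1 W2.
      apply/eqP; rewrite eq_sym -s1 -s1' -E1 -Agw; [|lia|lia].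
      by rewrite E2 E eqxx.
    + by rewrite -s1 -s1' hyz.
have Lsub : {subset L <= undup w}.
  move=> x; rewrite mem_undup /L inE => /orP [/eqP -> | /mapP [y hy ->]].
  - rewrite /wf /sf; apply: mem_nth; rewrite hsz0; lia.
  - move: hy; rewrite mem_iota => hy; have [h1 _ _ _] := hg y ltac:(lia).
    rewrite /wf /sf; apply: mem_nth; rewrite hsz0; lia.
have := uniq_leq_size Luniq Lsub; rewrite /L /= size_map size_iota => hL.
apply: leq_trans hL.
have -> : M.+1 = size (iota 0 M.+1) by rewrite size_iota.
apply: uniq_leq_size; first exact: undup_uniq.
move=> x; rewrite mem_undup mem_iota => hx; have := hleM x hx; lia.
Qed.

Unset Implicit Arguments.

Theorem theorem5p1 (T0 : eqType) (w0 : seq T0) (A : seq nat) (S : seq nat) :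
  manacher w0 = A ->
  manacher S = A ->
  (forall S' : seq nat, manacher S' = A -> lex_le S S') ->
  [/\ (* (1) first occurrences *)
      (forall i m : nat, 3 <= i -> 1 <= m <= size S ->
         nth 0 S m.-1 = i.-1 ->
         (forall m', 1 <= m' < m -> nth 0 S m'.-1 != i.-1) ->
         exists t, 1 <= t <= m /\ matchesZP (i - 2) (sub S t m.-1)),
      (* (2) later occurrences *)
      (forall i m : nat, 3 <= i -> 1 <= m <= size S ->
         nth 0 S m.-1 = i.-1 ->
         (exists m', 1 <= m' < m /\ nth 0 S m'.-1 = i.-1) ->
         pal_dependent S m \/
         exists t, 1 <= t <= m /\ matchesZP (i - 2) (sub S t m.-1))
    & (* (3) S uses the minimum number of distinct symbols *)
      (forall (T : eqType) (w : seq T), manacher w = A ->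
         size (undup S) <= size (undup w))].
Proof.
move=> _ hS hmin.
have Hmin : forall S' : seq nat, manacher S' = manacher S -> lex_le S S'.
  by move=> S'; rewrite hS; apply: hmin.
split.
- move=> i m hi hm hsm hfirst.
  have Hd : ~ pal_dependent S m.
    move=> Hd; case: (dep_earlier Hd) => m' [hm' E].
    by move: (hfirst m' hm'); rewrite /sf in E; rewrite E hsm eqxx.
  have h2 : 2 <= s_ S m by rewrite /sf hsm; lia.
  have := core Hmin hm Hd h2.
  by rewrite /sf hsm; have -> : i.-1 - 1 = i - 2 by lia.
- move=> i m hi hm hsm _.
  case: (classic (pal_dependent S m)) => Hd; first by left.
  right.
  have h2 : 2 <= s_ S m by rewrite /sf hsm; lia.
  have := core Hmin hm Hd h2.
  by rewrite /sf hsm; have -> : i.-1 - 1 = i - 2 by lia.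
- move=> T w hw; apply: part3 => //; by rewrite hw hS.
Qed.
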